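(* Let $U$ be a finite set and let $Q=(q_{ij})$ and $Q'=(q'_{ij})$ be two PCMC rate families on $U$ with stationary distributions $\pi=\pi_U$ and $\pi'=\pi'_U$ of their chains on $U$. Suppose $A_1,\dots,A_k$ is a contractible partition of $U$ for both $Q$ and $Q'$ with respect to the same $\Lambda=(\lambda_{ij})_{i\ne j}$. Then for every $i\in\{1,\dots,k\}$, \[\sum_{x\in A_i}p_{xU}=\sum_{x\in A_i}p'_{xU},\] i.e. $\pi(A_i)=\pi'(A_i)$.
   Context: Pairwise Choice Markov Chain (PCMC) model: $U$ is a finite set of alternatives; the parameters are off-diagonal rates $q_{ij}\ge 0$ ($i\neq j\in U$) subject to $q_{ij}+q_{ji}\ge 1$ for all distinct $i,j$. $Q_U$ is the $U\times U$ matrix with these off-diagonal entries and diagonal entries $q_{ii}=-\sum_{j\neq i} q_{ij}$; $\pi_U$ is the unique probability vector with $\pi_U^TQ_U=0$, and $p_{iU}=\pi_U(i)$ (similarly $p'_{iU}=\pi'_U(i)$ for $Q'$). For $A\subseteq U$, $\pi(A)=\sum_{x\in A}\pi(x)$. Contractible partition: a partition of $U$ into nonempty sets $A_1,\dots,A_k$ is contractible with respect to $\Lambda=(\lambda_{ij})_{i\ne j\in\{1,\dots,k\}}$ if $q_{ab}=\lambda_{ij}$ for all $a\in A_i$, $b\in A_j$, $i\ne j$ (rates within a single block are unrestricted beyond the PCMC constraints). *)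

(* Defs.v *)
From HB Require Import structures.
From mathcomp Require Import all_boot all_order all_algebra.
Set Implicit Arguments. Unset Strict Implicit. Unset Printing Implicit Defensive.
Import Order.TTheory GRing.Theory Num.Theory.
Local Open Scope ring_scope.

Section PCMC.
Variables (R : realFieldType) (U : finType).

Definition is_PCMC (q : U -> U -> R) : Prop :=
  forall i j, i != j -> 0 <= q i j /\ 1 <= q i j + q j i.

Definition QU (q : U -> U -> R) : 'M[R]_#|U| :=
  \matrix_(i, j) (let a := enum_val i in let b := enum_val j in
     if a == b then - \sum_(l | l != a) q a l else q a b).

Definition is_stationary (q : U -> U -> R) (pi : U -> R) : Prop :=
  (forall x, 0 <= pi x) /\ \sum_x pi x = 1 /\
  (\row_i pi (enum_val i)) *m QU q = 0.

(* The partition of U into nonempty blocks A_1..A_k, given by the block map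
   blk (A_i = blk^{-1}(i)), is contractible for q w.r.t. lam. *)
Definition contractible (k : nat) (blk : U -> 'I_k) (lam : 'I_k -> 'I_k -> R)
  (q : U -> U -> R) : Prop :=
  (forall i : 'I_k, exists a, blk a = i) /\
  (forall a b, blk a != blk b -> q a b = lam (blk a) (blk b)).

End PCMC.

(* Main.v *)
Require Import Defs.
From HB Require Import structures.
From mathcomp Require Import all_boot all_order all_algebra.
Import Order.TTheory GRing.Theory Num.Theory.
Local Open Scope ring_scope.

Lemma balance (R : realFieldType) (U : finType) (q : U -> U -> R) (pi : U -> R) :
  is_stationary q pi -> forall y,
  \sum_(x | x != y) pi x * q x y = pi y * \sum_(l | l != y) q y l.
Proof.
case=> _ [_ H] y.
move/matrixP/(_ 0 (enum_rank y)): H; rewrite !mxE.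
rewrite (reindex (@enum_rank U)) /=; last first.
  by exists enum_val => x _; rewrite ?enum_rankK ?enum_valK.
under eq_bigr => x _ do rewrite !mxE !enum_rankK.
rewrite (bigD1 y) //= eqxx.
have -> : \sum_(i | i != y) pi i * (if i == y then - \sum_(l | l != i) q i l else q i y) = \sum_(x | x != y) pi x * q x y.
  by apply: eq_bigr => x /negbTE ->.
move=> E.
move/eqP: E; rewrite addrC addr_eq0 => /eqP ->.
by rewrite mulrN opprK.
Qed.

Lemma flow (R : realFieldType) (U : finType) (q : U -> U -> R) (pi : U -> R)
  (V : pred U) : is_stationary q pi ->
  \sum_(y | V y) \sum_(x | ~~ V x) pi x * q x y =
  \sum_(y | V y) \sum_(x | ~~ V x) pi y * q y x.
Proof.
move/balance=> bal.
have E : \sum_(y | V y) (\sum_(x | x != y) pi x * q x y) =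
         \sum_(y | V y) (\sum_(x | x != y) pi y * q y x).
  by apply: eq_bigr => y _; rewrite bal mulr_sumr.
have spl : forall F : U -> U -> R, \sum_(y | V y) \sum_(x | x != y) F x y =
   \sum_y \sum_x (if [&& V y, V x & x != y] then F x y else 0) +
   \sum_(y | V y) \sum_(x | ~~ V x) F x y.
  move=> F.
  have -> : \sum_y \sum_x (if [&& V y, V x & x != y] then F x y else 0) =
     \sum_(y | V y) \sum_(x | (x != y) && V x) F x y.
    rewrite [RHS]big_mkcond; apply: eq_bigr => y _.
    case: (boolP (V y)) => Vy /=; last by rewrite big1.
    rewrite [RHS]big_mkcond; apply: eq_bigr => x _; by rewrite andbC.
  rewrite -big_split; apply: eq_bigr => y Vy; rewrite (bigID V) /=; congr (_ + _).
  apply: eq_bigl => x; apply: andb_idl => nVx; apply/eqP => exy.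
  by rewrite exy Vy in nVx.
rewrite !spl in E.
have W : \sum_y \sum_x (if [&& V y, V x & x != y] then pi x * q x y else 0) =
         \sum_y \sum_x (if [&& V y, V x & x != y] then pi y * q y x else 0).
  rewrite exchange_big /=; apply: eq_bigr => y _; apply: eq_bigr => x _.
  by rewrite andbCA eq_sym.
by rewrite W in E; apply: (addrI _ E).
Qed.

Definition bP {R : realFieldType} {U : finType} {k} (blk : U -> 'I_k) (pi : U -> R) j :=
  \sum_(x | blk x == j) pi x.
Definition cS {R : realFieldType} {U : finType} {k} (blk : U -> 'I_k)
  (lam : 'I_k -> 'I_k -> R) (S : pred 'I_k) j := \sum_(y | S (blk y)) lam j (blk y).
Definition dS {R : realFieldType} {U : finType} {k} (blk : U -> 'I_k)
  (lam : 'I_k -> 'I_k -> R) (S : pred 'I_k) j := \sum_(y | ~~ S (blk y)) lam j (blk y).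

Lemma block_flow (R : realFieldType) (U : finType) (q : U -> U -> R) (pi : U -> R)
  k (blk : U -> 'I_k) (lam : 'I_k -> 'I_k -> R) (S : pred 'I_k) :
  is_stationary q pi -> contractible blk lam q ->
  \sum_(j | ~~ S j) bP blk pi j * cS blk lam S j =
  \sum_(j | S j) bP blk pi j * dS blk lam S j.
Proof.
move=> st [_ ct].
have := @flow _ _ _ _ (fun y => S (blk y)) st.
have dif : forall x y, S (blk y) -> ~~ S (blk x) -> blk x != blk y.
  by move=> x y Sy nSx; apply/eqP => e; rewrite e Sy in nSx.
rewrite (eq_bigr (fun y => \sum_(x | ~~ S (blk x)) pi x * lam (blk x) (blk y))); last first.
  by move=> y Sy; apply: eq_bigr => x nSx; rewrite ct ?dif.
rewrite [RHS](eq_bigr (fun y => pi y * dS blk lam S (blk y))); last first.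
  move=> y Sy; rewrite /dS mulr_sumr; apply: eq_bigr => x nSx.
  by rewrite ct // eq_sym dif.
rewrite exchange_big /=.
rewrite (eq_bigr (fun x => pi x * cS blk lam S (blk x))); last first.
  by move=> x _; rewrite /cS mulr_sumr.
move=> E.
have L : \sum_(j | ~~ S j) bP blk pi j * cS blk lam S j =
  \sum_(x | ~~ S (blk x)) pi x * cS blk lam S (blk x).
  rewrite [RHS](partition_big blk (fun j => ~~ S j)) //=.
  apply: eq_bigr => j Sj; rewrite /bP mulr_suml; apply: eq_big => [x|x /eqP -> //].
  by case: eqP => [->|]; rewrite ?Sj ?andbF ?andbT.
have Rr : \sum_(j | S j) bP blk pi j * dS blk lam S j =
  \sum_(x | S (blk x)) pi x * dS blk lam S (blk x).
  rewrite [RHS](partition_big blk S) //=.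
  apply: eq_bigr => j Sj; rewrite /bP mulr_suml; apply: eq_big => [x|x /eqP -> //].
  by case: eqP => [->|]; rewrite ?Sj ?andbF ?andbT.
by rewrite L Rr.
Qed.

Lemma sum_bP (R : realFieldType) (U : finType) k (blk : U -> 'I_k) (pi : U -> R) :
  \sum_j bP blk pi j = \sum_x pi x.
Proof. by rewrite [RHS](partition_big blk xpredT). Qed.

Lemma block_le (R : realFieldType) (U : finType) (q q' : U -> U -> R) (pi pi' : U -> R)
  k (blk : U -> 'I_k) (lam : 'I_k -> 'I_k -> R) :
  is_PCMC q -> is_stationary q pi -> is_stationary q' pi' ->
  contractible blk lam q -> contractible blk lam q' ->
  forall i, bP blk pi i <= bP blk pi' i.
Proof.
move=> pc st st' ct ct'.
have wit := ct.1.
have lam_ge0 : forall i j, i != j -> 0 <= lam i j.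
  move=> i j ij; have [a ea] := wit i; have [b eb] := wit j.
  move: ij; rewrite -ea -eb => ij.
  have ab : a != b by apply/eqP => e; rewrite e eqxx in ij.
  by case: (pc a b ab) => + _; rewrite ct.2.
have lam_sum : forall a b, blk a != blk b -> 1 <= lam (blk a) (blk b) + lam (blk b) (blk a).
  move=> a b ab; have ab' : a != b by apply/eqP => e; rewrite e eqxx in ab.
  rewrite -!ct.2 // 1?eq_sym //; exact: (pc a b ab').2.
move=> i0; rewrite leNgt; apply/negP => Hi0.
pose D j := bP blk pi j - bP blk pi' j.
pose S : pred 'I_k := fun j => bP blk pi' j < bP blk pi j.
have Si0 : S i0 by [].
have E := @block_flow _ _ _ _ _ _ _ S st ct; have E' := @block_flow _ _ _ _ _ _ _ S st' ct'.
have ED : \sum_(j | ~~ S j) D j * cS blk lam S j = \sum_(j | S j) D j * dS blk lam S j.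
  rewrite /D; under eq_bigr do rewrite mulrBl; under [RHS]eq_bigr do rewrite mulrBl.
  by rewrite !sumrB E E'.
have neq : forall i j, S i -> ~~ S j -> i != j.
  by move=> i j Si nSj; apply/eqP => e; rewrite -e Si in nSj.
have c0 : forall j, ~~ S j -> 0 <= cS blk lam S j.
  move=> j nSj; apply: sumr_ge0 => y Sy; apply: lam_ge0; rewrite eq_sym; exact: neq.
have d0 : forall j, S j -> 0 <= dS blk lam S j.
  move=> j Sj; apply: sumr_ge0 => y Sy; apply: lam_ge0; exact: neq.
have Dn : forall j, ~~ S j -> D j <= 0.
  by move=> j; rewrite /S /= -leNgt subr_le0.
have Dp : forall j, S j -> 0 < D j.
  by move=> j; rewrite /S /= subr_gt0.
have L0 : \sum_(j | ~~ S j) D j * cS blk lam S j <= 0.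
  rewrite -oppr_ge0 -sumrN; apply: sumr_ge0 => j nSj.
  by rewrite oppr_ge0; apply: mulr_le0_ge0; [exact: Dn | exact: c0].
have R0 : 0 <= \sum_(j | S j) D j * dS blk lam S j.
  by apply: sumr_ge0 => j Sj; apply: mulr_ge0; [apply: ltW; exact: Dp | exact: d0].
have RZ : \sum_(j | S j) D j * dS blk lam S j = 0.
  by apply/le_anti; rewrite R0 -ED L0.
have dz : forall j, S j -> dS blk lam S j = 0.
  move=> j Sj.
  have H := psumr_eq0P (fun j Sj => mulr_ge0 (ltW (Dp j Sj)) (d0 j Sj)) RZ Sj.
  move/eqP: H; rewrite mulf_eq0 => /orP[|/eqP //].
  by rewrite gt_eqF ?Dp.
have lz : forall i j, S i -> ~~ S j -> lam i j = 0.
  move=> i j Si nSj; have [b eb] := wit j.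
  have := psumr_eq0P _ (dz i Si); rewrite -eb; apply.
    by move=> y nSy; apply: lam_ge0; exact: neq.
  by rewrite eb.
have cpos : forall j, ~~ S j -> 0 < cS blk lam S j.
  move=> j nSj; have [a ea] := wit i0; have [b eb] := wit j.
  rewrite /cS (bigD1 a) /=; last by rewrite ea.
  apply: (@lt_le_trans _ _ 1); first exact: ltr01.
  have h1 : 1 <= lam j (blk a).
    have := lam_sum b a; rewrite eb ea (lz i0 j) // addr0; apply.
    by rewrite eq_sym neq.
  apply: le_trans h1 _; rewrite lerDl.
  apply: sumr_ge0 => y /andP[Sy _]; apply: lam_ge0; rewrite eq_sym; exact: neq.
have LZ : \sum_(j | ~~ S j) - (D j * cS blk lam S j) = 0.
  by rewrite sumrN; apply/eqP; rewrite oppr_eq0; apply/eqP/le_anti; rewrite L0 ED R0.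
have Dz : forall j, ~~ S j -> D j = 0.
  move=> j nSj.
  have H0 : forall j, ~~ S j -> 0 <= - (D j * cS blk lam S j).
    by move=> j' nSj'; rewrite oppr_ge0; apply: mulr_le0_ge0; [exact: Dn | exact: c0].
  have := psumr_eq0P H0 LZ nSj.
  by move/eqP; rewrite oppr_eq0 mulf_eq0 (gt_eqF (cpos _ nSj)) orbF => /eqP.
have sD : \sum_j D j = 0.
  rewrite /D sumrB !sum_bP.
  by case: st => _ [-> _]; case: st' => _ [-> _]; rewrite subrr.
move: sD; rewrite (bigID S) /= [X in _ + X]big1 ?addr0; last by move=> j; exact: Dz.
rewrite (bigD1 i0) //=; apply/eqP; rewrite gt_eqF //.
apply: (@lt_le_trans _ _ (D i0)); first exact: Dp.
rewrite lerDl; apply: sumr_ge0 => j /andP[Sj _]; exact: ltW (Dp j Sj).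
Qed.

Theorem proposition3 (R : realFieldType) (U : finType)
  (q q' : U -> U -> R) (pi pi' : U -> R)
  (k : nat) (blk : U -> 'I_k) (lam : 'I_k -> 'I_k -> R) :
  is_PCMC q -> is_PCMC q' ->
  is_stationary q pi -> is_stationary q' pi' ->
  contractible blk lam q -> contractible blk lam q' ->
  forall i : 'I_k, \sum_(x | blk x == i) pi x = \sum_(x | blk x == i) pi' x.
Proof.
move=> pc pc' st st' ct ct' i; apply/le_anti.
rewrite (@block_le _ _ _ _ _ _ _ _ _ pc st st' ct ct' i).
exact: (@block_le _ _ _ _ _ _ _ _ _ pc' st' st ct' ct i).
Qed.
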